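(* Let $q=3$, with $G_3$-orbits of planes $\mathcal N_1,\dots,\mathcal N_4$ and of points $\mathcal M_1,\dots,\mathcal M_4$ as in the context. For each pair $(\mathcal N_i,\mathcal M_j)$ every plane of $\mathcal N_i$ contains exactly $t_{ij}$ points of $\mathcal M_j$ and every point of $\mathcal M_j$ lies on exactly $b_{ij}$ planes of $\mathcal N_i$, where, listing $(t_{ij},b_{ij})$ for $j=4,1,3,2$ in this order: $\mathcal N_2$: $(3,3),(2,6),(4,6),(4,3)$; $\mathcal N_3$: $(6,2),(3,3),(0,0),(4,1)$; $\mathcal N_4$: $(6,4),(0,0),(3,3),(4,2)$; $\mathcal N_1$: $(3,4),(1,4),(2,4),(7,7)$.
   Context: Notation. $\mathbb F_q$ is the field with $q$ elements, $\mathbb F_q^+=\mathbb F_q\cup\{\infty\}$. Points of $\mathrm{PG}(3,q)$ are written $\mathbf P(x_0,x_1,x_2,x_3)$ with $x$ a nonzero row vector up to scalars; $\boldsymbol\pi(c_0,c_1,c_2,c_3)$ is the plane $c_0x_0+c_1x_1+c_2x_2+c_3x_3=0$. Put $P(t)=\mathbf P(t^3,t^2,t,1)$ for $t\in\mathbb F_q$, $P(\infty)=\mathbf P(1,0,0,0)$, and $\mathscr C=\{P(t):t\in\mathbb F_q^+\}$ (the twisted cubic). The osculating planes are $\pi_{\rm osc}(t)=\boldsymbol\pi(1,-3t,3t^2,-t^3)$ ($t\in\mathbb F_q$) and $\pi_{\rm osc}(\infty)=\boldsymbol\pi(0,0,0,1)$; these $q+1$ planes are called $\Gamma$-planes. The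 tangent at $P(t)$, $t\in\mathbb F_q$, is the line through $P(t)$ and $\mathbf P(3t^2,2t,1,0)$; the tangent at $P(\infty)$ is the line through $\mathbf P(1,0,0,0)$ and $\mathbf P(0,1,0,0)$. A real chord is a line through two distinct points of $\mathscr C$. For $\alpha\in\mathbb F_{q^2}\setminus\mathbb F_q$, the line of $\mathrm{PG}(3,q^2)$ through $P(\alpha),P(\alpha^q)$ is defined over $\mathbb F_q$, and the corresponding line of $\mathrm{PG}(3,q)$ is an imaginary chord. $G_q$ is the group of all projectivities of $\mathrm{PG}(3,q)$ mapping $\mathscr C$ onto itself. Plane types: $\Gamma$-plane = osculating plane; $\overline{1_{\mathscr C}}$-plane = non-osculating plane meeting $\mathscr C$ in exactly one point; $d_{\mathscr C}$-plane ($d\in\{0,2,3\}$) = plane meeting $\mathscr C$ in exactly $d$ points. For $q=3$ all four $\Gamma$-planes contain the line $\mathcal A:\ x_0=x_3=0$. Point types for $q=3$: $\mathscr C$-point = point of $\mathscr C$; $4_\Gamma$-point = point of $\mathcal A$; TO-point = point not in $\mathscr C\cup\mathcal A$ lying on a tangent; RC-point = point not in $\mathscr C\cup\mathcal A$, on no tangent, lying on a real chord; IC-point = any point of none of the previous types. The $G_3$-orbits are: planes $\mathcal N_1=\{\Gamma\text{- and }\overline{1_{\mathscr C}}\text{-planes}\}$ (16), $\mathcal N_2=\{2_{\mathscr C}\text{-planes}\}$ (12), $\mathcal N_3=\{3_{\mathscr C}\text{-planes}\}$ (4), $\mathcal N_4=\{0_{\mathscr C}\text{-planes}\}$ (8);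 points $\mathcal M_1=\{\mathscr C\text{-points}\}$ (4), $\mathcal M_2=\{4_\Gamma\text{- and IC-points}\}$ (16), $\mathcal M_3=\{\text{TO-points}\}$ (8), $\mathcal M_4=\{\text{RC-points}\}$ (12). *)

(* Defs.v *)
(* PG(3,3) over 'F_3, the twisted cubic and its G_3-orbits
   of points and planes (as described by their types in the paper). *)
From HB Require Import structures.
From mathcomp Require Import all_boot all_order all_algebra.
Set Implicit Arguments. Unset Strict Implicit. Unset Printing Implicit Defensive.
Import Order.TTheory GRing.Theory Num.Theory.
Local Open Scope ring_scope.

Notation F := 'F_3.
Notation vec := 'rV[F]_4.

Definition mkv (a b c d : F) : vec := \row_(i < 4) nth 0 [:: a; b; c; d] i.

(* canonical representative of a projective point / plane:
   the first nonzero coordinate equals 1 *)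
Definition normalized (x : vec) : bool :=
  [exists i : 'I_4, (x 0 i == 1) && [forall j : 'I_4, (j < i)%N ==> (x 0 j == 0)]].

(* the points (resp. planes) of PG(3,3), one representative each *)
Definition PGpts : {set vec} := [set x : vec | normalized x].

Definition proj_eq (x y : vec) : bool := [exists k : F, (k != 0) && (y == k *: x)].

Definition incid (c x : vec) : bool := \sum_(i < 4) c 0 i * x 0 i == 0.

(* P(t), t in F_q^+ = option F (None = infinity) *)
Definition Pt (t : option F) : vec :=
  if t is Some s then mkv (s ^+ 3) (s ^+ 2) s 1 else mkv 1 0 0 0.

Definition onC (x : vec) : bool := [exists t : option F, proj_eq x (Pt t)].

Definition osc (t : option F) : vec :=
  if t is Some s then mkv 1 (- (3%:R * s)) (3%:R * s ^+ 2) (- s ^+ 3) else mkv 0 0 0 1.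

Definition onLine (a b x : vec) : bool :=
  [exists l : F, exists m : F, ((l != 0) || (m != 0)) && proj_eq x (l *: a + m *: b)].

(* second point spanning the tangent at P(t) *)
Definition tanDir (t : option F) : vec :=
  if t is Some s then mkv (3%:R * s ^+ 2) (2%:R * s) 1 0 else mkv 0 1 0 0.

Definition onTangent (x : vec) : bool := [exists t : option F, onLine (Pt t) (tanDir t) x].

Definition onRealChord (x : vec) : bool :=
  [exists s : option F, exists t : option F, (s != t) && onLine (Pt s) (Pt t) x].

Definition onA (x : vec) : bool := (x 0 0 == 0) && (x 0 3 == 0).

Definition Cpoint (x : vec) : bool := onC x.
Definition Gam4point (x : vec) : bool := onA x.
Definition TOpoint (x : vec) : bool := ~~ onC x && ~~ onA x && onTangent x.
Definition RCpoint (x : vec) : bool :=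
  ~~ onC x && ~~ onA x && ~~ onTangent x && onRealChord x.
Definition ICpoint (x : vec) : bool :=
  ~~ Cpoint x && ~~ Gam4point x && ~~ TOpoint x && ~~ RCpoint x.

Definition nC (c : vec) : nat := #|[set x in PGpts | onC x && incid c x]|.
Definition GammaPlane (c : vec) : bool := [exists t : option F, proj_eq c (osc t)].
Definition onebarPlane (c : vec) : bool := ~~ GammaPlane c && (nC c == 1%N).

Definition N1 : {set vec} := [set c in PGpts | GammaPlane c || onebarPlane c].
Definition N2 : {set vec} := [set c in PGpts | nC c == 2%N].
Definition N3 : {set vec} := [set c in PGpts | nC c == 3%N].
Definition N4 : {set vec} := [set c in PGpts | nC c == 0%N].
Definition M1 : {set vec} := [set x in PGpts | Cpoint x].
Definition M2 : {set vec} := [set x in PGpts | Gam4point x || ICpoint x].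
Definition M3 : {set vec} := [set x in PGpts | TOpoint x].
Definition M4 : {set vec} := [set x in PGpts | RCpoint x].

Definition tb (N M : {set vec}) (t b : nat) : Prop :=
  (forall c, c \in N -> #|[set x in M | incid c x]| = t) /\
  (forall x, x \in M -> #|[set c in N | incid c x]| = b).

(* Main.v *)
Require Import Defs.
From mathcomp Require Import all_boot all_order all_algebra.
Set Implicit Arguments. Unset Strict Implicit. Unset Printing Implicit Defensive.
Import GRing.Theory.
Local Open Scope ring_scope.
From Stdlib Require Import FunctionalExtensionality.

Definition fz : F := @Ordinal 3 0 isT.
Definition fo : F := @Ordinal 3 1 isT.
Definition ft : F := @Ordinal 3 2 isT.
Definition fadd (a b : F) : F :=
  @Ordinal 3 ((nat_of_ord a + nat_of_ord b) %% 3) (@ltn_pmod _ 3 isT).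
Definition fmul (a b : F) : F :=
  @Ordinal 3 ((nat_of_ord a * nat_of_ord b) %% 3) (@ltn_pmod _ 3 isT).
Definition fneg (a : F) : F :=
  @Ordinal 3 ((3 - nat_of_ord a) %% 3) (@ltn_pmod _ 3 isT).
Definition feq (a b : F) : bool := eqn (nat_of_ord a) (nat_of_ord b).

Lemma fzE : fz = 0. Proof. exact: val_inj. Qed.
Lemma foE : fo = 1. Proof. exact: val_inj. Qed.
Lemma ftE : ft = 2%:R. Proof. exact: val_inj. Qed.
Definition f3 : F := @Ordinal 3 0 isT.
Lemma f3E : f3 = 3%:R. Proof. exact: val_inj. Qed.
Lemma faddF : fadd = (fun a b => a + b).
Proof.
apply: functional_extensionality => a; apply: functional_extensionality => b.
apply: val_inj.
by case: a => [[|[|[|?]]] ?]; case: b => [[|[|[|?]]] ?].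
Qed.
Lemma fmulF : fmul = (fun a b => a * b).
Proof.
apply: functional_extensionality => a; apply: functional_extensionality => b.
apply: val_inj.
by case: a => [[|[|[|?]]] ?]; case: b => [[|[|[|?]]] ?].
Qed.
Lemma fnegF : fneg = (fun a => - a).
Proof.
apply: functional_extensionality => a.
apply: val_inj.
by case: a => [[|[|[|?]]] ?].
Qed.
Lemma feqF : feq = (fun a b => a == b).
Proof.
apply: functional_extensionality => a; apply: functional_extensionality => b.
by [].
Qed.

Definition C := (F * F * F * F)%type.
Definition e0 (v : C) : F := v.1.1.1.
Definition e1 (v : C) : F := v.1.1.2.
Definition e2 (v : C) : F := v.1.2.
Definition e3 (v : C) : F := v.2.
Definition v2m (v : C) : vec := mkv (e0 v) (e1 v) (e2 v) (e3 v).
Definition m2v (x : vec) : C := (x 0 0, x 0 1, x 0 2, x 0 3).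
Definition entc (v : C) (i : 'I_4) : F := nth 0 [:: e0 v; e1 v; e2 v; e3 v] i.

Lemma v2mE v i : v2m v 0 i = entc v i.
Proof. by rewrite mxE. Qed.

Lemma v2mK x : v2m (m2v x) = x.
Proof.
apply/rowP => i; rewrite mxE.
case: i => [[|[|[|[|k]]]] Hi] //=; congr (x _ _); exact: val_inj.
Qed.

Lemma v2m_inj : injective v2m.
Proof.
move=> [[[a b] c] d] [[[a' b'] c'] d'] /rowP H.
have H0 := H 0; have H1 := H 1; have H2 := H 2; have H3 := H 3.
rewrite !mxE /e0 /e1 /e2 /e3 /= in H0 H1 H2 H3.
by rewrite H0 H1 H2 H3.
Qed.

Definition fl : seq F := [:: fz; fo; ft].
Lemma memfl (a : F) : a \in fl.
Proof.
case: a => [[|[|[|k]]] Hk]; rewrite !inE.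
- by apply/orP; left; apply/eqP/val_inj.
- by apply/orP; right; apply/orP; left; apply/eqP/val_inj.
- by apply/orP; right; apply/orP; right; apply/eqP/val_inj.
- by [].
Qed.

Definition ol : seq (option F) := None :: map Some fl.
Lemma memol (t : option F) : t \in ol.
Proof. case: t => [s|] //. rewrite /ol in_cons /=. by have := memfl s; rewrite !inE; case/or3P => /eqP ->. Qed.

Definition o4 : seq 'I_4 :=
  [:: @Ordinal 4 0 erefl; @Ordinal 4 1 erefl; @Ordinal 4 2 erefl; @Ordinal 4 3 erefl].
Lemma memo4 (i : 'I_4) : i \in o4.
Proof.
case: i => [[|[|[|[|k]]]] Hi]; rewrite !inE.
- by apply/orP; left; apply/eqP/val_inj.
- by apply/orP; right; apply/orP; left; apply/eqP/val_inj.
- by apply/orP; right; apply/orP; right; apply/orP; left; apply/eqP/val_inj.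
- by apply/orP; right; apply/orP; right; apply/orP; right; apply/eqP/val_inj.
- by [].
Qed.

Lemma existsF (P : pred F) : [exists k, P k] = has P fl.
Proof. by apply/existsP/hasP => [[k Pk]|[k _ Pk]]; exists k => //; apply: memfl. Qed.
Lemma existsO (P : pred (option F)) : [exists k, P k] = has P ol.
Proof. by apply/existsP/hasP => [[k Pk]|[k _ Pk]]; exists k => //; apply: memol. Qed.
Lemma exists4 (P : pred 'I_4) : [exists k, P k] = has P o4.
Proof. by apply/existsP/hasP => [[k Pk]|[k _ Pk]]; exists k => //; apply: memo4. Qed.
Lemma forall4 (P : pred 'I_4) : [forall k, P k] = all P o4.
Proof. by apply/forallP/allP => H k //; apply: H; apply: memo4. Qed.

Definition L2 : seq (F * F) := [seq (a, b) | a <- fl, b <- fl].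
Definition L3 : seq (F * F * F) := [seq (p, c) | p <- L2, c <- fl].
Definition Lc : seq C := [seq (p, d) | p <- L3, d <- fl].
Lemma memLc v : v \in Lc.
Proof.
case: v => [[[a b] c] d].
apply: (allpairs_f (fun p d => (p, d))); last exact: memfl.
apply: (allpairs_f (fun p d => (p, d))); last exact: memfl.
by apply: (allpairs_f (fun p d => (p, d))); exact: memfl.
Qed.
Lemma uniqLc : uniq Lc.
Proof. by vm_compute. Qed.

Lemma cardL (P : pred vec) : #|[set x | P x]| = count (fun v => P (v2m v)) Lc.
Proof.
rewrite cardsE cardE /enum_mem size_filter -enumT.
have pe : perm_eq (enum vec) (map v2m Lc).
  apply: uniq_perm; first exact: enum_uniq.
    by rewrite map_inj_uniq ?uniqLc //; apply: v2m_inj.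
  move=> x; rewrite mem_enum; apply/esym.
  by rewrite -(v2mK x) map_f // memLc.
by rewrite (permP pe) count_map.
Qed.

Definition mk (a b c d : F) : C := (a, b, c, d).
Definition scc (k : F) (v : C) : C := mk (fmul k (e0 v)) (fmul k (e1 v)) (fmul k (e2 v)) (fmul k (e3 v)).
Definition addc (u v : C) : C := mk (fadd (e0 u) (e0 v)) (fadd (e1 u) (e1 v)) (fadd (e2 u) (e2 v)) (fadd (e3 u) (e3 v)).

Lemma scaleE k v : k *: v2m v = v2m (scc k v).
Proof. rewrite /scc fmulF; by apply/rowP => i; rewrite !mxE; case: i => [[|[|[|[|k']]]] Hi]. Qed.
Lemma addE u v : v2m u + v2m v = v2m (addc u v).
Proof. rewrite /addc faddF; by apply/rowP => i; rewrite !mxE; case: i => [[|[|[|[|k']]]] Hi]. Qed.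
Lemma eqE u v : (v2m u == v2m v) = (u == v).
Proof. by apply/eqP/eqP => [/v2m_inj|->]. Qed.

Definition normc (v : C) : bool :=
  has (fun i : 'I_4 => feq (entc v i) fo && all (fun j : 'I_4 => (j < i)%N ==> feq (entc v j) fz) o4) o4.
Lemma normE v : normalized (v2m v) = normc v.
Proof.
rewrite /normc feqF foE fzE; cbv beta; rewrite /normalized exists4; apply: eq_has => i; cbv beta; rewrite forall4 v2mE.
by rewrite /= !v2mE. Qed.
Lemma PGE v : (v2m v \in PGpts) = normc v.
Proof. by rewrite !inE normE. Qed.

Definition ceq (u w : C) : bool := feq (e0 u) (e0 w) && feq (e1 u) (e1 w) && feq (e2 u) (e2 w) && feq (e3 u) (e3 w).
Lemma ceqF : ceq = (fun u w => u == w).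
Proof. apply: functional_extensionality => u; apply: functional_extensionality => w. by case: u => [[[? ?] ?] ?]; case: w => [[[? ?] ?] ?]; rewrite /ceq feqF. Qed.
Definition projc (u w : C) : bool := has (fun k => ~~ feq k fz && ceq w (scc k u)) fl.
Lemma projE u w : proj_eq (v2m u) (v2m w) = projc u w.
Proof. rewrite /projc feqF ceqF fzE; cbv beta. by rewrite /proj_eq existsF; apply: eq_has => k; cbv beta; rewrite scaleE eqE. Qed.

Definition incc (c x : C) : bool :=
  feq (fadd (fmul (e0 c) (e0 x)) (fadd (fmul (e1 c) (e1 x)) (fadd (fmul (e2 c) (e2 x)) (fadd (fmul (e3 c) (e3 x)) fz)))) fz.
Lemma incidE c x : incid (v2m c) (v2m x) = incc c x.
Proof. rewrite /incc feqF faddF fmulF fzE. by rewrite /incid !big_ord_recl big_ord0 !mxE. Qed.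

Definition ptc (t : option F) : C :=
  if t is Some s then mk (fmul s (fmul s s)) (fmul s s) s fo else mk fo fz fz fz.
Lemma PtE t : Pt t = v2m (ptc t). Proof. by rewrite /ptc fmulF foE fzE; case: t. Qed.
Definition oscc (t : option F) : C :=
  if t is Some s then mk fo (fneg (fmul f3 s)) (fmul f3 (fmul s s)) (fneg (fmul s (fmul s s))) else mk fz fz fz fo.
Lemma oscE t : osc t = v2m (oscc t). Proof. rewrite /oscc fnegF fmulF foE fzE f3E; by case: t. Qed.
Definition tanc (t : option F) : C :=
  if t is Some s then mk (fmul f3 (fmul s s)) (fmul ft s) fo fz else mk fz fo fz fz.
Lemma tanE t : tanDir t = v2m (tanc t). Proof. rewrite /tanc fmulF foE ftE fzE f3E; by case: t. Qed.

Definition onCc (x : C) : bool := has (fun t => projc x (ptc t)) ol.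
Lemma onCE x : onC (v2m x) = onCc x.
Proof. by rewrite /onC existsO; apply: eq_has => t; cbv beta; rewrite PtE projE. Qed.

Definition onLinec (a b x : C) : bool :=
  has (fun l => has (fun m => ((l != 0) || (m != 0)) && projc x (addc (scc l a) (scc m b))) fl) fl.
Lemma onLineE a b x : onLine (v2m a) (v2m b) (v2m x) = onLinec a b x.
Proof.
rewrite /onLine existsF; apply: eq_has => l; cbv beta; rewrite existsF; apply: eq_has => m /=.
by rewrite !scaleE addE projE.
Qed.

Definition onTanc (x : C) : bool := has (fun t => onLinec (ptc t) (tanc t) x) ol.
Lemma onTanE x : onTangent (v2m x) = onTanc x.
Proof. by rewrite /onTangent existsO; apply: eq_has => t; cbv beta; rewrite PtE tanE onLineE. Qed.

Definition onRCc (x : C) : bool :=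
  has (fun s => has (fun t => (s != t) && onLinec (ptc s) (ptc t) x) ol) ol.
Lemma onRCE x : onRealChord (v2m x) = onRCc x.
Proof.
rewrite /onRealChord existsO; apply: eq_has => s; cbv beta; rewrite existsO; apply: eq_has => t /=.
by rewrite !PtE onLineE.
Qed.

Definition onAc (x : C) : bool := feq (e0 x) fz && feq (e3 x) fz.
Lemma onAE x : onA (v2m x) = onAc x.
Proof. by rewrite /onAc feqF fzE /onA !mxE. Qed.

Definition CptsL := filter (fun u => normc u && onCc u) Lc.
Definition nCc (c : C) : nat := count (incc c) CptsL.
Lemma nCE c : nC (v2m c) = nCc c.
Proof.
rewrite /nCc /CptsL count_filter /nC cardL; apply: eq_count => u.
cbv beta. rewrite /predI /= PGE onCE incidE. by case: (incc c u); rewrite ?andbT ?andbF.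
Qed.

Definition Gamc (c : C) : bool := has (fun t => projc c (oscc t)) ol.
Lemma GamE c : GammaPlane (v2m c) = Gamc c.
Proof. by rewrite /GammaPlane existsO; apply: eq_has => t; cbv beta; rewrite oscE projE. Qed.

Definition N1c c := normc c && (Gamc c || (~~ Gamc c && (nCc c == 1%N))).
Definition N2c c := normc c && (nCc c == 2%N).
Definition N3c c := normc c && (nCc c == 3%N).
Definition N4c c := normc c && (nCc c == 0%N).
Definition TOc x := ~~ onCc x && ~~ onAc x && onTanc x.
Definition RCc x := ~~ onCc x && ~~ onAc x && ~~ onTanc x && onRCc x.
Definition ICc x := ~~ onCc x && ~~ onAc x && ~~ TOc x && ~~ RCc x.
Definition M1c x := normc x && onCc x.
Definition M2c x := normc x && (onAc x || ICc x).
Definition M3c x := normc x && TOc x.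
Definition M4c x := normc x && RCc x.

Lemma N1E v : (v2m v \in N1) = N1c v.
Proof. by rewrite !inE normE /onebarPlane GamE nCE. Qed.
Lemma N2E v : (v2m v \in N2) = N2c v.
Proof. by rewrite !inE normE nCE. Qed.
Lemma N3E v : (v2m v \in N3) = N3c v.
Proof. by rewrite !inE normE nCE. Qed.
Lemma N4E v : (v2m v \in N4) = N4c v.
Proof. by rewrite !inE normE nCE. Qed.
Lemma M1E v : (v2m v \in M1) = M1c v.
Proof. by rewrite !inE normE /Cpoint onCE. Qed.
Lemma M2E v : (v2m v \in M2) = M2c v.
Proof. by rewrite !inE normE /Gam4point /ICpoint /Cpoint /Gam4point /TOpoint /RCpoint onCE onAE onTanE onRCE. Qed.
Lemma M3E v : (v2m v \in M3) = M3c v.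
Proof. by rewrite !inE normE /TOpoint onCE onAE onTanE. Qed.
Lemma M4E v : (v2m v \in M4) = M4c v.
Proof. by rewrite !inE normE /RCpoint onCE onAE onTanE onRCE. Qed.

Definition tbc (Nc Mc : pred C) (t b : nat) : bool :=
  all (fun c => Nc c ==> (count (fun x => Mc x && incc c x) Lc == t)) Lc &&
  all (fun x => Mc x ==> (count (fun c => Nc c && incc c x) Lc == b)) Lc.

Lemma tbP (N M : {set vec}) (Nc Mc : pred C) t b :
  (forall v, (v2m v \in N) = Nc v) -> (forall v, (v2m v \in M) = Mc v) ->
  tbc Nc Mc t b -> tb N M t b.
Proof.
move=> hN hM /andP[/allP h1 /allP h2]; split.
- move=> c; rewrite -(v2mK c) hN => Hc.
  have := h1 _ (memLc (m2v c)); rewrite Hc implyTb => /eqP <-.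
  by rewrite cardL; apply: eq_count => u; rewrite hM incidE.
- move=> x; rewrite -(v2mK x) hM => Hx.
  have := h2 _ (memLc (m2v x)); rewrite Hx implyTb => /eqP <-.
  by rewrite cardL; apply: eq_count => u; rewrite hN incidE.
Qed.


Definition tbl (Ns Ms : seq C) (t b : nat) : bool :=
  all (fun c => count (fun x => incc c x) Ms == t) Ns &&
  all (fun x => count (fun c => incc c x) Ns == b) Ms.

Lemma tbcfP Nc Mc t b : tbl (filter Nc Lc) (filter Mc Lc) t b -> tbc Nc Mc t b.
Proof.
rewrite /tbl /tbc !all_filter => /andP[h1 h2]; apply/andP; split.
- apply: sub_all h1 => c; rewrite [in X in X -> _]inE; case: (Nc c) => // /eqP <-.
  by rewrite count_filter; apply/eqP; apply: eq_count => x; rewrite [in RHS]inE andbC.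
- apply: sub_all h2 => x; rewrite [in X in X -> _]inE; case: (Mc x) => // /eqP <-.
  by rewrite count_filter; apply/eqP; apply: eq_count => c; rewrite [in RHS]inE andbC.
Qed.

Definition N1L := filter N1c Lc.
Definition N2L := filter N2c Lc.
Definition N3L := filter N3c Lc.
Definition N4L := filter N4c Lc.
Definition M1L := filter M1c Lc.
Definition M2L := filter M2c Lc.
Definition M3L := filter M3c Lc.
Definition M4L := filter M4c Lc.

Lemma tbQ (N M : {set vec}) (Nc Mc : pred C) t b :
  (forall v, (v2m v \in N) = Nc v) -> (forall v, (v2m v \in M) = Mc v) ->
  tbl (filter Nc Lc) (filter Mc Lc) t b -> tb N M t b.
Proof. by move=> hN hM /tbcfP; apply: tbP. Qed.

Lemma chkN2 : [&& tbl N2L M4L 3 3, tbl N2L M1L 2 6, tbl N2L M3L 4 6 & tbl N2L M2L 4 3].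
Proof. vm_compute. reflexivity. Qed.

Lemma chkN3 : [&& tbl N3L M4L 6 2, tbl N3L M1L 3 3, tbl N3L M3L 0 0 & tbl N3L M2L 4 1].
Proof. vm_compute. reflexivity. Qed.

Lemma chkN4 : [&& tbl N4L M4L 6 4, tbl N4L M1L 0 0, tbl N4L M3L 3 3 & tbl N4L M2L 4 2].
Proof. vm_compute. reflexivity. Qed.

Lemma chkN1 : [&& tbl N1L M4L 3 4, tbl N1L M1L 1 4, tbl N1L M3L 2 4 & tbl N1L M2L 7 7].
Proof. vm_compute. reflexivity. Qed.

Local Close Scope ring_scope.
Theorem mainTheorem11 :
  (tb N2 M4 3 3 /\ tb N2 M1 2 6 /\ tb N2 M3 4 6 /\ tb N2 M2 4 3) /\
  (tb N3 M4 6 2 /\ tb N3 M1 3 3 /\ tb N3 M3 0 0 /\ tb N3 M2 4 1) /\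
  (tb N4 M4 6 4 /\ tb N4 M1 0 0 /\ tb N4 M3 3 3 /\ tb N4 M2 4 2) /\
  (tb N1 M4 3 4 /\ tb N1 M1 1 4 /\ tb N1 M3 2 4 /\ tb N1 M2 7 7).
Proof.
have /and4P[N2a N2b N2c N2d] := chkN2.
have /and4P[N3a N3b N3c N3d] := chkN3.
have /and4P[N4a N4b N4c N4d] := chkN4.
have /and4P[N1a N1b N1c N1d] := chkN1.
split; [|split; [|split]]; (split; [|split; [|split]]).
- exact: (tbQ N2E M4E N2a).
- exact: (tbQ N2E M1E N2b).
- exact: (tbQ N2E M3E N2c).
- exact: (tbQ N2E M2E N2d).
- exact: (tbQ N3E M4E N3a).
- exact: (tbQ N3E M1E N3b).
- exact: (tbQ N3E M3E N3c).
- exact: (tbQ N3E M2E N3d).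
- exact: (tbQ N4E M4E N4a).
- exact: (tbQ N4E M1E N4b).
- exact: (tbQ N4E M3E N4c).
- exact: (tbQ N4E M2E N4d).
- exact: (tbQ N1E M4E N1a).
- exact: (tbQ N1E M1E N1b).
- exact: (tbQ N1E M3E N1c).
- exact: (tbQ N1E M2E N1d).
Qed.
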